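(* Let $P,Q\in\mathcal{PP}(n)$ with $\iota(P)\leq Q$. Then $\langle P,Q\rangle_q=q^{n(n-1)-\ell(P)-\ell(Q)}$, where $\ell(R)=\sharp\{(x,y)\in R^2\mid x<_r y\}$.
   Context: A plane poset is a finite set with two partial orders $\leq_h,\leq_r$ such that two distinct elements are $\leq_h$-comparable iff they are not $\leq_r$-comparable; $\mathcal{PP}(n)$ is the set of isomorphism classes of plane posets with $n$ elements. On a plane poset, $x\leq y$ iff ($x\leq_h y$ or $x\leq_r y$) is a total order (known fact). For $P,Q\in\mathcal{PP}(n)$, $\theta_{P,Q}$ is the increasing bijection $P\to Q$ and $P\leq Q$ means: for all $x,y\in P$, $\theta_{P,Q}(x)\leq_h\theta_{P,Q}(y)$ in $Q$ implies $x\leq_h y$ in $P$. $\iota(P)=(P,\leq_r,\leq_h)$. For $q$ in a field $K$, $\langle P,Q\rangle_q=q^{\phi(P,Q)}$ if $\iota(P)\leq Q$ and $0$ otherwise, where $\phi(P,Q)=\sharp\{(x,y)\in P^2\mid x<_r y,\ \theta_{P,Q}(x)<_h\theta_{P,Q}(y)\}+\sharp\{(x,y)\in P^2\mid x<_h y,\ \theta_{P,Q}(x)<_r\theta_{P,Q}(y)\}$, with $q^0=1$. *)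

(* Defs.v *)
From mathcomp Require Import all_boot all_order all_algebra.
Set Implicit Arguments. Unset Strict Implicit. Unset Printing Implicit Defensive.
Import GRing.Theory.

Record plane_poset (T : finType) := PlanePoset {
  leh : rel T;
  ler : rel T;
  leh_refl : reflexive leh;
  leh_anti : forall x y, leh x y -> leh y x -> x = y;
  leh_trans : transitive leh;
  ler_refl : reflexive ler;
  ler_anti : forall x y, ler x y -> ler y x -> x = y;
  ler_trans : transitive ler;
  plane_ax : forall x y, x != y ->
     (leh x y || leh y x) = ~~ (ler x y || ler y x)
}.

Arguments leh {T} p x y.
Arguments ler {T} p x y.

Definition lth {T : finType} (P : plane_poset T) (x y : T) := (x != y) && leh P x y.
Definition ltr {T : finType} (P : plane_poset T) (x y : T) := (x != y) && ler P x y.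

Definition pp_le {T : finType} (P : plane_poset T) (x y : T) := leh P x y || ler P x y.

Lemma iota_plane_ax (T : finType) (P : plane_poset T) (x y : T) : x != y ->
  (ler P x y || ler P y x) = ~~ (leh P x y || leh P y x).
Proof. by move=> /(plane_ax P) ->; rewrite negbK. Qed.

Definition pp_iota {T : finType} (P : plane_poset T) : plane_poset T :=
  @PlanePoset T (ler P) (leh P) (@ler_refl T P) (@ler_anti T P) (@ler_trans T P)
    (@leh_refl T P) (@leh_anti T P) (@leh_trans T P) (@iota_plane_ax T P).

(* theta is an increasing bijection P -> Q (for the total orders); such a
   bijection exists and is unique when #|T| = #|U|: it is theta_{P,Q}. *)
Definition incr_bij {T U : finType} (P : plane_poset T) (Q : plane_poset U)
  (theta : T -> U) : Prop :=
  bijective theta /\ forall x y, pp_le P x y -> pp_le Q (theta x) (theta y).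

Definition pp_leq {T U : finType} (P : plane_poset T) (Q : plane_poset U)
  (theta : T -> U) : bool :=
  [forall x, forall y, leh Q (theta x) (theta y) ==> leh P x y].

Definition phi {T U : finType} (P : plane_poset T) (Q : plane_poset U)
  (theta : T -> U) : nat :=
  #|[set xy : T * T | ltr P xy.1 xy.2 && lth Q (theta xy.1) (theta xy.2)]|
  + #|[set xy : T * T | lth P xy.1 xy.2 && ltr Q (theta xy.1) (theta xy.2)]|.

Definition pairing {K : fieldType} {T U : finType} (P : plane_poset T)
  (Q : plane_poset U) (theta : T -> U) (q : K) : K :=
  if pp_leq (pp_iota P) Q theta then (q ^+ phi P Q theta)%R else 0%R.

Definition ellr {T : finType} (R : plane_poset T) : nat :=
  #|[set xy : T * T | ltr R xy.1 xy.2]|.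

(* Main.v *)
Require Import Defs.
From mathcomp Require Import all_boot all_order all_algebra.
From mathcomp Require Import zify.

Lemma card_pairs (T : finType) (p : rel T) :
  #|[set xy : T * T | p xy.1 xy.2]| = \sum_x \sum_y (p x y : nat).
Proof.
rewrite -sum1_card big_mkcond /= pair_big /=.
by apply: eq_bigr => [[x y]] _; rewrite inE; case: (p x y).
Qed.

Definition ellh {T : finType} (R : plane_poset T) : nat :=
  #|[set xy : T * T | lth R xy.1 xy.2]|.

Lemma pair_ind (T : finType) (R : plane_poset T) x y :
  (ltr R x y : nat) + ltr R y x + lth R x y + lth R y x = (x != y).
Proof.
rewrite /ltr /lth eq_sym [y == x]eq_sym.
case: eqP => [->|/eqP nxy] //=.
have := plane_ax R nxy.
have ah := @leh_anti T R x y; have ar := @ler_anti T R x y.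
move: ah ar.
case: (leh R x y); case: (leh R y x); case: (ler R x y); case: (ler R y x) => //= ah ar _;
  try (by have E := ah erefl erefl; rewrite E eqxx in nxy);
  try (by have E := ar erefl erefl; rewrite E eqxx in nxy).
Qed.

Lemma sum_neq (T : finType) :
  \sum_(x : T) \sum_(y : T) ((x != y) : nat) = #|T| * (#|T| - 1).
Proof.
rewrite (eq_bigr (fun _ => #|T| - 1)) ?sum_nat_const ?card_ord //.
move=> x _.
rewrite -big_mkcond_idem.
Abort.

Lemma sum_neq (T : finType) :
  \sum_(x : T) \sum_(y : T) ((x != y) : nat) = #|T| * (#|T| - 1).
Proof.
rewrite (eq_bigr (fun _ => #|T| - 1)).
  by rewrite sum_nat_const mulnC.
move=> x _.
rewrite -(big_mkcond (fun y => x != y) (fun _ => 1)) /= sum1_card.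
have -> : #|(fun i : T => x != i)| = #|predC1 x|.
  by apply: eq_card => y; rewrite /= inE eq_sym.
by rewrite cardC1 subn1.
Qed.

Lemma count_plane (T : finType) (R : plane_poset T) :
  2 * (ellh R + ellr R) = #|T| * (#|T| - 1).
Proof.
rewrite /ellh /ellr !card_pairs -sum_neq.
have swap (p : rel T) : \sum_x \sum_y (p y x : nat) = \sum_x \sum_y (p x y : nat).
  by rewrite exchange_big.
transitivity (\sum_x \sum_y ((ltr R x y : nat) + ltr R y x + lth R x y + lth R y x)).
  symmetry; under eq_bigr => x _ do rewrite !big_split /=.
  rewrite !big_split /= (swap (ltr R)) (swap (lth R)); lia.
by apply: eq_bigr => x _; apply: eq_bigr => y _; rewrite pair_ind.
Qed.

Lemma reindex2 (T U : finType) (theta : T -> U) (F : U -> U -> nat) :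
  bijective theta ->
  \sum_(u : U) \sum_(v : U) F u v = \sum_(x : T) \sum_(y : T) F (theta x) (theta y).
Proof.
move=> bt; rewrite (reindex theta) /=; last exact: onW_bij.
apply: eq_bigr => x _; rewrite (reindex theta) //; exact: onW_bij.
Qed.

Theorem proposition28 (K : fieldType) (q : K) (n : nat) (T U : finType)
  (P : plane_poset T) (Q : plane_poset U) (theta : T -> U) :
  #|T| = n -> #|U| = n ->
  incr_bij P Q theta ->
  pp_leq (pp_iota P) Q theta ->
  pairing P Q theta q = (q ^+ (n * (n - 1) - ellr P - ellr Q)%N)%R.
Proof.
move=> hT hU [bt hinc] hleq.
rewrite /pairing hleq.
have injt : injective theta := bij_inj bt.
have hl x y : leh Q (theta x) (theta y) -> ler P x y.
  by move=> h; have := forallP (forallP hleq x) y; rewrite h.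
have E1 : #|[set xy : T * T | ltr P xy.1 xy.2 && lth Q (theta xy.1) (theta xy.2)]|
          = ellh Q.
  rewrite /ellh (@card_pairs _ (fun x y => ltr P x y && lth Q (theta x) (theta y))) card_pairs (@reindex2 _ _ theta (fun u v => (lth Q u v : nat)) bt).
  apply: eq_bigr => x _; apply: eq_bigr => y _.
  congr nat_of_bool.
  apply/andP/idP => [[] //|h]; split => //.
  move: h; rewrite /lth /ltr => /andP[ne hq].
  rewrite (hl _ _ hq) andbT.
  by apply: contraNneq ne => ->.
have E2 : #|[set xy : T * T | lth P xy.1 xy.2 && ltr Q (theta xy.1) (theta xy.2)]|
          = ellh P.
  rewrite /ellh (@card_pairs _ (fun x y => lth P x y && ltr Q (theta x) (theta y))) card_pairs.
  apply: eq_bigr => x _; apply: eq_bigr => y _.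
  congr nat_of_bool.
  apply/andP/idP => [[] //|h]; split => //.
  move: h; rewrite /lth /ltr => /andP[ne hP].
  have ne' : theta x != theta y by rewrite (inj_eq injt).
  rewrite ne' /=.
  have := hinc x y; rewrite /pp_le hP => /(_ isT).
  case hq: (leh Q (theta x) (theta y)) => //= _.
  have hr := hl _ _ hq.
  by have := plane_ax P ne; rewrite hP hr.
have cP := @count_plane _ P; have cQ := @count_plane _ Q.
rewrite hT in cP; rewrite hU in cQ.
rewrite /phi E1 E2; congr (GRing.exp _ _); lia.
Qed.
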